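(* Let $G=(V,E)$ be a finite simple graph of order $n$, let $T=n-1$, and let $k$ be an integer with $k\leq\mathrm{PT}(G)$. If $(x,y,z)$ is an optimal solution of the integer program with the constraints of the Time Step Model $\mathrm{TSM}(G,T)$ together with the additional constraint $\sum_{t\in[T]}z^t\geq k$, and objective ''minimize $\sum_{v\in V}x^0_v+\frac{1}{2T}\sum_{t\in[T]}z^t$'', then $C=\{v\in V\colon x^0_v=1\}$ is a minimum zero forcing set of $G$ with $\mathrm{pt}(G,C)=\sum_{t\in[T]}z^t\geq k$. Furthermore, there is no minimum zero forcing set $\hat C$ of $G$ with $k<\mathrm{pt}(G,\hat C)<\mathrm{pt}(G,C)$.
   Context: Zero forcing: under the standard color change rule a filled vertex $u$ can force a non-filled vertex $v$ if $v$ is the only non-filled neighbor of $u$; $C\subseteq V$ is a zero forcing set if, starting with $C$ filled and repeatedly forcing, all of $V$ becomes filled; a minimum zero forcing set is one of minimum size. The propagation time $\mathrm{pt}(G,C)$ is the smallest $t^*$ such that, starting from $C^{[0]}=C$ and setting $C^{[t]}=C^{[t-1]}\cup\{v\notin C^{[t-1]}\colon$ some $u\in C^{[t-1]}$ has $v$ as its only neighbor outside $C^{[t-1]}\}$, one has $C^{[t^*]}=V$ ($\infty$ if $C$ is not a zero forcing set). $\mathrm{PT}(G)=\max\{\mathrm{pt}(G,C)\colon C$ a minimum zero forcing set$\}$. $N(u)$ is the neighborhood of $u$ and $d(u)=|N(u)|$. Time Step Model constraints: $A$ is the set of arcs containing $(u,v)$ and $(v,u)$ for each edge $\{u,v\}$,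 $[T]=\{1,\dots,T\}$. Binary variables $x^t_v$ ($v\in V$, $t\in\{0,\dots,T\}$), $y^t_a$ ($a\in A$, $t\in[T]$), $z^t$ ($t\in[T]$), with constraints: (1) $x^0_v+\sum_{t\in[T]}\sum_{a=(u,v)\in A}y^t_a=1$ for all $v$; (2) $y^t_a\leq x^{t-1}_u$ for all $a=(u,v)\in A$, $t\in[T]$; (3) $y^t_a\leq x^{t-1}_w$ for all $a=(u,v)\in A$, $w\in N(u)\setminus\{v\}$, $t\in[T]$; (4) $x^t_v=x^{t-1}_v+\sum_{a=(u,v)\in A}y^t_a$ for all $v$, $t\in[T]$; (5) $x^{t-1}_u-x^{t-1}_v+\sum_{w\in N(u)\setminus\{v\}}x^{t-1}_w\leq\sum_{a=(w,v)\in A}y^t_a+d(u)-1$ for all $(u,v)\in A$, $t\in[T]$; (6) $\frac1n\sum_{v\in V}(x^t_v-x^{t-1}_v)-z^t\leq0$ for all $t\in[T]$; (7) $z^t-\sum_{v\in V}(x^t_v-x^{t-1}_v)\leq 0$ for all $t\in[T]$. *)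

(* Defs.v *)
(* Graph G = (V, e) with V : finType, e : rel V symmetric and irreflexive. *)
From HB Require Import structures.
From mathcomp Require Import all_boot all_order all_algebra.
Set Implicit Arguments. Unset Strict Implicit. Unset Printing Implicit Defensive.
Import Order.TTheory GRing.Theory Num.Theory.

Section ZF.
Variables (V : finType) (e : rel V).

Definition nbhd (u : V) : {set V} := [set w | e u w].
Definition deg (u : V) : nat := #|nbhd u|.

Definition can_force (C : {set V}) (u v : V) : bool :=
  [&& u \in C, e u v, v \notin C & [forall w, (e u w && (w != v)) ==> (w \in C)]].

Definition forceable (C : {set V}) (v : V) : bool := [exists u, can_force C u v].

Fixpoint forcing_seq_fills (C : {set V}) (s : seq V) : bool :=
  if s is v :: s' then forceable C v && forcing_seq_fills (v |: C) s'
  else C == [set: V].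

Definition zero_forcing_set (C : {set V}) : Prop :=
  exists s : seq V, forcing_seq_fills C s.

Definition min_zero_forcing_set (C : {set V}) : Prop :=
  zero_forcing_set C /\ forall D : {set V}, zero_forcing_set D -> #|C| <= #|D|.

Definition prop_step (C : {set V}) : {set V} := C :|: [set v | forceable C v].
Definition C_at (C : {set V}) (t : nat) : {set V} := iter t prop_step C.

(* pt(G, C) = t  (finite value); pt(G,C) = ∞ iff no such t exists *)
Definition pt_is (C : {set V}) (t : nat) : Prop :=
  C_at C t = [set: V] /\ forall s, s < t -> C_at C s <> [set: V].

Definition PT_is (p : nat) : Prop :=
  (exists C, min_zero_forcing_set C /\ pt_is C p) /\
  (forall C t, min_zero_forcing_set C -> pt_is C t -> t <= p).

Local Open Scope ring_scope.

(* Time Step Model TSM(G, T) with additional constraint sum z >= k.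
   x t v = x^t_v (t = 0..T), y t u v = y^t_(u,v) (t in [T], (u,v) arc),
   z t = z^t (t in [T]); binary variables are booleans, read as 0/1 in rat. *)
Definition bR (b : bool) : rat := (b : nat)%:R.

Definition inflow (y : nat -> V -> V -> bool) (t : nat) (v : V) : rat :=
  \sum_(u | e u v) bR (y t u v).

Definition TSM_feasible (T : nat) (x : nat -> V -> bool)
    (y : nat -> V -> V -> bool) (z : nat -> bool) : Prop :=
  (forall v, bR (x 0%N v) + \sum_(1 <= t < T.+1) inflow y t v = 1) /\
  (forall u v t, e u v -> (1 <= t <= T)%N ->
                  bR (y t u v) <= bR (x t.-1 u)) /\
  (forall u v w t, e u v -> e u w -> w != v -> (1 <= t <= T)%N ->
                  bR (y t u v) <= bR (x t.-1 w)) /\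
  (forall v t, (1 <= t <= T)%N ->
                  bR (x t v) = bR (x t.-1 v) + inflow y t v) /\
  (forall u v t, e u v -> (1 <= t <= T)%N ->
                  bR (x t.-1 u) - bR (x t.-1 v)
                    + \sum_(w | e u w && (w != v)) bR (x t.-1 w)
                  <= inflow y t v + (deg u)%:R - 1) /\
  (forall t, (1 <= t <= T)%N ->
                  (#|V|%:R)^-1 * \sum_(v : V) (bR (x t v) - bR (x t.-1 v))
                    - bR (z t) <= 0) /\
  (forall t, (1 <= t <= T)%N ->
                  bR (z t) - \sum_(v : V) (bR (x t v) - bR (x t.-1 v)) <= 0).

Definition z_sum (T : nat) (z : nat -> bool) : nat := \sum_(1 <= t < T.+1) (z t : nat).

Definition IP_feasible (T : nat) (k : int) x y z : Prop :=
  TSM_feasible T x y z /\ k%:~R <= ((z_sum T z)%:R : rat).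

Definition IP_objective (T : nat) (x : nat -> V -> bool) (z : nat -> bool) : rat :=
  \sum_(v : V) bR (x 0%N v) + ((2 * T)%:R)^-1 * \sum_(1 <= t < T.+1) bR (z t).

Definition IP_optimal (T : nat) (k : int) x y z : Prop :=
  IP_feasible T k x y z /\
  forall x' y' z', IP_feasible T k x' y' z' ->
    IP_objective T x z <= IP_objective T x' z'.

End ZF.

(* Main.v *)
Require Import Defs.
From HB Require Import structures.
From mathcomp Require Import all_boot all_order all_algebra.
From mathcomp Require Import lra zify.
Import Order.TTheory GRing.Theory Num.Theory.
Set Implicit Arguments. Unset Strict Implicit.

Section G.
Variables (V : finType) (e : rel V).
Implicit Types X Y : {set V}.

Lemma step_sub X : X \subset prop_step e X.
Proof. exact: subsetUl. Qed.

Lemma forceable_notin X v : forceable e X v -> v \notin X.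
Proof. by case/existsP=> u /and4P[]. Qed.

Lemma step_mono X Y : X \subset Y -> prop_step e X \subset prop_step e Y.
Proof.
move=> sXY; apply/subsetP=> v; rewrite !inE => /orP[vX|/existsP[u /and4P[uX euv vX /forallP H]]].
  by rewrite (subsetP sXY).
case vY: (v \in Y) => //=; apply/existsP; exists u; apply/and4P; split => //.
- exact: (subsetP sXY).
- by rewrite vY.
apply/forallP=> w; apply/implyP=> hw; apply: (subsetP sXY).
exact: (implyP (H w)).
Qed.

Lemma C_atS X t : C_at e X t.+1 = prop_step e (C_at e X t).
Proof. by rewrite /C_at iterS. Qed.

Lemma C_at_mono X s t : (s <= t)%N -> C_at e X s \subset C_at e X t.
Proof.
move/subnK=> <-; elim: (t - s)%N => [|d IH]; first by rewrite add0n.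
by rewrite addSn C_atS (subset_trans IH) // step_sub.
Qed.

Lemma C_at_monoX X Y t : X \subset Y -> C_at e X t \subset C_at e Y t.
Proof. by move=> h; elim: t => // t IH; rewrite !C_atS step_mono. Qed.

Lemma C_at_fix X t : prop_step e (C_at e X t) = C_at e X t ->
  forall s, (t <= s)%N -> C_at e X s = C_at e X t.
Proof.
move=> h s /subnK <-; elim: (s - t)%N => [|d IH]; first by rewrite add0n.
by rewrite addSn C_atS IH h.
Qed.

Lemma step0 : prop_step e set0 = set0.
Proof.
apply/setP=> v; rewrite !inE /=; apply/negbTE/existsPn => u.
by rewrite /can_force inE.
Qed.

Lemma pt_strict X p s : pt_is e X p -> (s < p)%N -> C_at e X s \proper C_at e X s.+1.
Proof.
case=> hp hlt sp; rewrite properEneq C_at_mono // andbT.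
apply/negP=> /eqP h.
have hf : prop_step e (C_at e X s) = C_at e X s by rewrite -C_atS -h.
have := C_at_fix hf (ltnW sp).
by rewrite hp => h'; apply: (hlt s sp); rewrite -h'.
Qed.

Lemma pt_bound X p : pt_is e X p -> (p <= #|V|.-1)%N.
Proof.
move=> hpt; case: p hpt => [|p] hpt //.
have key : forall s, (s < p.+1)%N -> (s.+1 <= #|C_at e X s|)%N.
  elim=> [|s IH] sp.
    rewrite card_gt0; apply/negP=> /eqP X0.
    have := pt_strict hpt sp; rewrite C_atS X0 step0.
    by rewrite properE subxx.
  apply: leq_ltn_trans (IH (ltnW sp)) _.
  exact: proper_card (pt_strict hpt (ltnW sp)).
have := key p (ltnSn p).
have : C_at e X p \proper [set: V].
  rewrite properEneq subsetT andbT; apply/eqP; case: hpt => _; apply; exact: ltnSn.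
move/proper_card; rewrite cardsT => h1 h2.
have := leq_ltn_trans h2 h1; case: #|V| => //.
Qed.

Lemma C_at_full X p s : C_at e X p = [set: V] -> (p <= s)%N -> C_at e X s = [set: V].
Proof.
move=> h ps; apply/eqP; rewrite eqEsubset subsetT /= -h; exact: C_at_mono.
Qed.

Lemma zfs_of X t : C_at e X t = [set: V] -> zero_forcing_set e X.
Proof.
move: {2}#|~: X| (leqnn #|~: X|) => n; elim: n X => [|n IH] X hn ht.
  exists [::]; rewrite /= eqEsubset subsetT /=.
  by apply/subsetP=> v _; move: hn; rewrite leqn0 cards_eq0 => /eqP/setP/(_ v); rewrite !inE; case: (v \in X).
case XT: (X == [set: V]); first by exists [::]; rewrite /= XT.
have : ~~ (prop_step e X \subset X).
  apply/negP=> sub.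
  have hf : prop_step e (C_at e X 0) = C_at e X 0 by apply/eqP; rewrite eqEsubset sub step_sub.
  have := C_at_fix hf (leq0n t); rewrite ht /= => h; by rewrite -h eqxx in XT.
case/subsetPn=> v; rewrite /prop_step !inE => /orP[->//|fv vX].
have [s hs] : exists s, forcing_seq_fills e (v |: X) s.
  apply: (IH (v |: X)).
    rewrite -ltnS; apply: leq_trans hn; apply: proper_card; rewrite setCU properEneq subsetIr andbT.
    apply/negP=> /eqP/setP/(_ v); rewrite !inE eqxx vX //.
  apply/eqP; rewrite eqEsubset subsetT /= -ht; apply: C_at_monoX; exact: subsetUr.
by exists (v :: s); rewrite /= fv.
Qed.

Lemma pt_exists X t : C_at e X t = [set: V] -> exists2 p, pt_is e X p & (p <= t)%N.
Proof.
move=> ht; have ex : exists s, C_at e X s == [set: V] by exists t; rewrite ht.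
case: (ex_minnP ex) => p /eqP hp hmin; exists p; last by apply: hmin; rewrite ht.
split=> // s sp /eqP hs; have := hmin s hs; rewrite leqNgt sp //.
Qed.

Lemma pt_unique X p q : pt_is e X p -> pt_is e X q -> p = q.
Proof.
case=> hp hp' [hq hq']; case: (ltngtP p q) => // h.
- by case: (hq' p h).
- by case: (hp' q h).
Qed.

Lemma pt_count X T p : pt_is e X p -> (p <= T)%N ->
  (\sum_(1 <= t < T.+1) (C_at e X t != C_at e X t.-1 : nat))%N = p.
Proof.
move=> hpt pT.
rewrite (big_cat_nat (n := p.+1)) //=.
rewrite (eq_big_nat _ _ (F2 := fun _ => 1%N)); last first.
  move=> t /andP[t1 tp]; have := pt_strict (s := t.-1) hpt.
  case: t t1 tp => // t _ tp /=; rewrite properEneq => /(_ tp) /andP[ne _].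
  by rewrite eq_sym ne.
rewrite sum_nat_const_nat big_nat_cond big1 ?muln1 ?subn1 ?addn0 //.
move=> t /andP[/andP[pt _] _]; case: hpt => hp _.
rewrite (C_at_full hp (ltnW pt)) (C_at_full hp (s := t.-1)) ?eqxx //.
by case: t pt.
Qed.

End G.

Local Open Scope ring_scope.

Lemma bRT : bR true = 1. Proof. by []. Qed.
Lemma bRF : bR false = 0. Proof. by []. Qed.
Lemma bR_ge0 b : 0 <= bR b. Proof. by case: b. Qed.
Lemma bR_le1 b : bR b <= 1. Proof. by case: b; rewrite ?bRT ?bRF. Qed.
Lemma bR_le (a b : bool) : (a -> b) -> bR a <= bR b.
Proof. by case: a; case: b => // /(_ isT). Qed.

Lemma sum_bR_card (V : finType) (f : V -> bool) :
  \sum_(v : V) bR (f v) = #|[set v | f v]|%:R.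
Proof.
rewrite -sum1_card natr_sum [RHS]big_mkcond /=; apply: eq_bigr => v _.
by rewrite inE; case: (f v).
Qed.

Lemma tele (f : nat -> rat) (g : nat -> rat) T :
  (forall t, (1 <= t <= T)%N -> g t = g t.-1 + f t) ->
  \sum_(1 <= t < T.+1) f t = g T - g 0%N.
Proof.
elim: T => [|T IH] h; first by rewrite big_geq // subrr.
rewrite big_nat_recr //= IH; last by move=> t /andP[t1 tT]; apply: h; rewrite t1 (leq_trans tT).
rewrite (h T.+1) //=; lra.
Qed.

Lemma sum_le_card (V : finType) (P : pred V) (f : V -> bool) :
  \sum_(w | P w) bR (f w) <= \sum_(w | P w) 1.
Proof. by apply: ler_sum => w _; apply: bR_le1. Qed.

Lemma sum_lt_card (V : finType) (P : pred V) (f : V -> bool) w0 :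
  P w0 -> ~~ f w0 -> \sum_(w | P w) bR (f w) <= \sum_(w | P w) 1 - 1.
Proof.
move=> P0 f0; rewrite (bigD1 w0) //= [X in _ <= X - _](bigD1 w0) //= (negbTE f0) bRF.
have := sum_le_card (fun w => P w && (w != w0)) f; lra.
Qed.

Lemma sum_all1 (V : finType) (P : pred V) (f : V -> bool) :
  (forall w, P w -> f w) -> \sum_(w | P w) bR (f w) = \sum_(w | P w) 1.
Proof. by move=> h; apply: eq_bigr => w /h ->. Qed.

Lemma deg_split (V : finType) (e : rel V) u v : e u v ->
  (deg e u)%:R = 1 + \sum_(w | e u w && (w != v)) (1 : rat).
Proof.
move=> euv; rewrite /deg -sumr_const (bigD1 v) ?inE //=; congr (_ + _).
by apply: eq_bigl => w; rewrite inE.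
Qed.


Lemma bR_true b : 1 <= bR b -> b.
Proof. by case: b. Qed.
Lemma bR_false b : bR b <= 0 -> ~~ b.
Proof. by case: b. Qed.

Lemma sound (V : finType) (e : rel V) T x y z : TSM_feasible e T x y z ->
  [/\ forall t, (t <= T)%N -> [set v | x t v] = C_at e [set v | x 0%N v] t,
      C_at e [set v | x 0%N v] T = [set: V] &
      forall t, (1 <= t <= T)%N -> z t = ([set v | x t v] != [set v | x t.-1 v])].
Proof.
case=> [h1 [h2 [h3 [h4 [h5 [h6 h7]]]]]].
have infl_ge0 t v : 0 <= inflow e y t v by apply: sumr_ge0 => u _; apply: bR_ge0.
have mono t v : (1 <= t <= T)%N -> x t.-1 v -> x t v.
  move=> tT xv; have := h4 v t tT; rewrite xv bRT => E; apply: bR_true.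
  have := infl_ge0 t v; lra.
have hA : forall t, (t <= T)%N -> [set v | x t v] = C_at e [set v | x 0%N v] t.
  elim=> [|t IH] tT; first by [].
  rewrite C_atS -IH ?(ltnW tT) //; apply/setP => v; rewrite /prop_step !inE.
  have E := h4 v t.+1 tT; rewrite /= in E.
  case xt: (x t v) => /=; first by apply: (mono t.+1) => //=; rewrite xt.
  rewrite xt bRF add0r in E.
  case xs: (x t.+1 v).
    rewrite xs bRT in E.
    have /existsP[u /andP[euv yuv]] : [exists u, e u v && y t.+1 u v].
      apply: contraT => /existsPn H; move: E.
      rewrite /inflow big1 ?oner_eq0 // => u euv; have := H u; rewrite euv /= => /negbTE ->.
      by rewrite bRF.
    apply/esym/existsP; exists u; rewrite /can_force !inE xt euv /=.
    have := h2 u v t.+1 euv tT; rewrite yuv bRT /= => /bR_true ->.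
    apply/forallP => w; apply/implyP => /andP[euw wv]; rewrite inE.
    by have := h3 u v w t.+1 euv euw wv tT; rewrite yuv bRT /= => /bR_true.
  rewrite xs bRF in E; apply/esym/negbTE/negP => /existsP[u /and4P[uX euv vX /forallP H]].
  have := h5 u v t.+1 euv tT; rewrite /= -E.
  rewrite inE in uX; rewrite uX xt bRT bRF sum_all1; last first.
    by move=> w hw; have := implyP (H w) hw; rewrite inE.
  rewrite (deg_split euv); lra.
have hB : C_at e [set v | x 0%N v] T = [set: V].
  rewrite -hA //; apply/setP => v; rewrite !inE; apply: bR_true.
  have := h1 v; rewrite (tele (g := fun t => bR (x t v))) //; first by lra.
  by move=> t tT; rewrite h4.
split=> // t tT.
have := h6 t tT; have := h7 t tT; rewrite sumrB !sum_bR_card.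
have sub : [set v | x t.-1 v] \subset [set v | x t v].
  by apply/subsetP => v; rewrite !inE; apply: mono.
case: eqVneq => [-> | ne].
  by rewrite subrr subr0 => /bR_false /negbTE -> _.
have : (#|[set v | x t.-1 v]| < #|[set v | x t v]|)%N.
  by apply: proper_card; rewrite properEneq sub eq_sym ne.
have : (#|[set v | x t v]| <= #|V|)%N by apply: max_card.
rewrite -!(ltr_nat rat) -!(ler_nat rat) => hn hlt.
case: (z t) => //; rewrite bRF subr0 => _ H.
have npos : (0 : rat) < #|V|%:R by apply: lt_le_trans hn; apply: le_lt_trans hlt.
have : 0 < (#|V|%:R : rat)^-1 * (#|[set v | x t v]|%:R - #|[set v | x t.-1 v]|%:R).
  apply: mulr_gt0; first by rewrite invr_gt0.
  by rewrite subr_gt0.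
lra.
Qed.


Section Comp.
Variables (V : finType) (e : rel V) (D : {set V}).

Definition xD t v := v \in C_at e D t.
Definition yD t u v := [pick w | can_force e (C_at e D t.-1) w v] == Some u.
Definition zD t := C_at e D t != C_at e D t.-1.

Lemma setmem (A : {set V}) : [set v | v \in A] = A.
Proof. by apply/setP => v; rewrite inE. Qed.

Lemma inflowD t v : inflow e yD t v = bR (forceable e (C_at e D t.-1) v).
Proof.
rewrite /inflow /yD /forceable; case: pickP => [u0 hu0 | hn].
  have -> : [exists u, can_force e (C_at e D t.-1) u v] by apply/existsP; exists u0.
  have euv : e u0 v by case/and4P: hu0.
  rewrite (bigD1 u0) //= eqxx bRT big1 ?addr0 // => u /andP[_ ne].
  by rewrite (inj_eq Some_inj) eq_sym (negbTE ne).
have -> : [exists u, can_force e (C_at e D t.-1) u v] = false.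
  by apply/negbTE/existsPn => u; rewrite hn.
by rewrite big1.
Qed.

Lemma yD_force t u v : yD t u v -> can_force e (C_at e D t.-1) u v.
Proof. by rewrite /yD; case: pickP => [w hw /eqP [<-] | _ //]. Qed.

Lemma complete T p : pt_is e D p -> (p <= T)%N ->
  [/\ TSM_feasible e T xD yD zD, z_sum T zD = p &
      IP_objective T xD zD = #|D|%:R + ((2 * T)%:R)^-1 * p%:R].
Proof.
move=> hpt pT.
have hT : C_at e D T = [set: V] by case: hpt => hp _; apply: C_at_full hp pT.
have zs : z_sum T zD = p by rewrite /z_sum /zD; apply: pt_count.
have h4 : forall v t, (1 <= t <= T)%N -> bR (xD t v) = bR (xD t.-1 v) + inflow e yD t v.
  move=> v [|t] // _; rewrite inflowD /xD C_atS /prop_step /= !inE.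
  case vX: (v \in C_at e D t) => /=.
    by have := @forceable_notin _ e (C_at e D t) v; rewrite vX; case: forceable => // /(_ isT).
  by rewrite bRF add0r.
split => //; last first.
  rewrite /IP_objective /xD sum_bR_card setmem -natr_sum.
  by congr (_ + _ * _); rewrite -zs /z_sum.
split.
  move=> v; rewrite (tele (g := fun t => bR (xD t v))); last by move=> t tT; apply: h4.
  by rewrite /xD hT inE bRT; lra.
split.
  move=> u v t euv tT; apply: bR_le => hy; have := yD_force hy; rewrite /xD; by case/and4P.
split.
  move=> u v w t euv euw wv tT; apply: bR_le => /yD_force /and4P[_ _ _ /forallP /(_ w)].
  by rewrite euw wv /xD /=.
split => //.
split.
  move=> u v t euv tT; rewrite inflowD (deg_split euv) /xD.
  set X := C_at e D t.-1.
  have Sle := sum_le_card (fun w => e u w && (w != v)) (fun w => w \in X).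
  have f0 := bR_ge0 (forceable e X v).
  case uX: (u \in X); last by rewrite bRF; have := bR_ge0 (v \in X); lra.
  case vX: (v \in X); first by rewrite !bRT; lra.
  case allw: [forall w, e u w && (w != v) ==> (w \in X)].
    have -> : forceable e X v by apply/existsP; exists u; rewrite /can_force uX euv vX allw.
    rewrite !bRT bRF; lra.
  move/negbT: allw => /forallPn [w0]; rewrite negb_imply => /andP[P0 n0].
  have := sum_lt_card (P := fun w => e u w && (w != v)) (f := fun w => w \in X) P0 n0; rewrite bRT bRF; lra.
have key : forall t, (1 <= t <= T)%N ->
   \sum_v (bR (xD t v) - bR (xD t.-1 v)) = #|C_at e D t|%:R - #|C_at e D t.-1|%:R.
  by move=> t _; rewrite sumrB /xD !sum_bR_card !setmem.
have sub : forall t, (1 <= t)%N -> C_at e D t.-1 \subset C_at e D t.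
  by move=> [|t] // _; apply: C_at_mono.
split.
  move=> t tT; rewrite key // /zD; case: eqVneq => [->|ne]; first by rewrite subrr mulr0 bRF subr0.
  have h1 : (#|C_at e D t| <= #|V|)%N by apply: max_card.
  have h2 : (#|C_at e D t.-1| < #|C_at e D t|)%N.
    by apply: proper_card; rewrite properEneq sub ?(andP tT).1 // eq_sym ne.
  move: h1 h2; rewrite -(ler_nat rat) -(ltr_nat rat) => h1 h2.
  have npos : (0 : rat) < #|V|%:R by apply: lt_le_trans h1; apply: le_lt_trans h2.
  rewrite bRT subr_le0 ler_pdivrMl // mulr1; have := ler0n rat #|C_at e D t.-1|; lra.
move=> t tT; rewrite key // /zD; case: eqVneq => [->|ne]; first by rewrite subrr bRF subr0.
have h2 : (#|C_at e D t.-1| < #|C_at e D t|)%N.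
  by apply: proper_card; rewrite properEneq sub ?(andP tT).1 // eq_sym ne.
rewrite bRT; have : (#|C_at e D t.-1|%:R + 1 : rat) <= #|C_at e D t|%:R.
  by rewrite natr1 ler_nat.
lra.
Qed.
End Comp.

Unset Implicit Arguments. Set Strict Implicit.

Theorem corollary4p8 (V : finType) (e : rel V)
    (e_sym : symmetric e) (e_irr : irreflexive e) (k : int)
    (hk : exists p : nat, PT_is e p /\ k <= p%:Z)
    (x : nat -> V -> bool) (y : nat -> V -> V -> bool) (z : nat -> bool)
    (hopt : IP_optimal e (#|V|.-1) k x y z) :
  let T := #|V|.-1 in
  let C := [set v | x 0%N v] in
  [/\ min_zero_forcing_set e C,
      pt_is e C (z_sum T z),
      k <= (z_sum T z)%:Z
    & forall (Ch : {set V}) (t : nat), min_zero_forcing_set e Ch -> pt_is e Ch t ->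
        ~ (k < t%:Z /\ (t < z_sum T z)%N)].
Proof.
move=> T C.
case: hopt => [[hfeas hk'] hmin].
have [hA hB hZ] := sound hfeas.
have zs_le : (z_sum T z <= T)%N.
  have : (\sum_(1 <= t < T.+1) (z t : nat) <= \sum_(1 <= t < T.+1) 1)%N.
    by apply: leq_sum => t _; case: (z t).
  by rewrite sum_nat_const_nat subn1 muln1.
have ptC : pt_is e C (z_sum T z).
  have [p0 hp0 p0T] := pt_exists hB.
  suff -> : z_sum T z = p0 by [].
  rewrite -(pt_count hp0 p0T) /z_sum.
  apply: eq_big_nat => t tT; rewrite hZ // -!hA //.
    by case/andP: tT => _ tT; apply: leq_trans (leq_pred t) tT.
  by case/andP: tT.
set q' := ((2 * T)%:R : rat)^-1.
have objx : IP_objective T x z = #|C|%:R + q' * (z_sum T z)%:R.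
  by rewrite /IP_objective sum_bR_card /z_sum natr_sum.
have compare : forall D q, pt_is e D q -> (q <= T)%N -> k <= q%:Z ->
    #|C|%:R + q' * (z_sum T z)%:R <= #|D|%:R + q' * q%:R.
  move=> D q hq qT kq; have [F Zs Obj] := complete hq qT.
  rewrite -objx -Obj; apply: (hmin _ (yD e D)); split => //.
  rewrite Zs.
  by rewrite -(ler_int rat) in kq.
have q'ge0 : 0 <= q' by rewrite invr_ge0 ler0n.
have [p [[[Ch0 [minCh0 ptCh0]] _] kp]] := hk.
have pT : (p <= T)%N by apply: pt_bound ptCh0.
have cardC : (#|C| <= #|Ch0|)%N.
  have := compare _ _ ptCh0 pT kp.
  have h1 : q' * p%:R < 1.
    rewrite /q'; case: (T) pT => [|T'] pT'.
      by rewrite muln0 invr0 mul0r ltr01.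
    rewrite ltr_pdivrMl ?ltr0n ?muln_gt0 // mulr1 ltr_nat; lia.
  have h2 : 0 <= q' * (z_sum T z)%:R by apply: mulr_ge0 => //; apply: ler0n.
  move=> h; have : (#|C|%:R : rat) < #|Ch0|%:R + 1 by lra.
  by rewrite natr1 ltr_nat ltnS.
have zfsC : zero_forcing_set e C by apply: zfs_of hB.
have minC : min_zero_forcing_set e C.
  split => // D hD; apply: leq_trans cardC _; exact: minCh0.2.
split => //.
  by rewrite -(ler_int rat).
move=> Ch t minCh ptCh [klt tlt].
have tT : (t <= T)%N by apply: leq_trans zs_le; apply: ltnW.
have := compare _ _ ptCh tT (ltW klt).
have -> : #|Ch| = #|C|.
  by apply/eqP; rewrite eqn_leq; apply/andP; split; [apply: minCh.2; exact: minC.1 | apply: minC.2; exact: minCh.1].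
rewrite lerD2l.
have q'gt0 : 0 < q'.
  rewrite /q' invr_gt0 ltr0n muln_gt0 /=; exact: leq_trans (leq_ltn_trans (leq0n t) tlt) zs_le.
by rewrite ler_pM2l // ler_nat leqNgt tlt.
Qed.
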